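(* Let $a<b$ be real numbers and let $f:[a,b]\to\mathbb{R}$ be an increasing function which is either convex or concave on $[a,b]$. Then for every integer $n\ge1$, $$A_{n+1}\le A_n\qquad\text{and}\qquad B_n\le B_{n+1}.$$
   Context: For a function $f:[a,b]\to\mathbb{R}$ and integers $n\ge1$, put $x_i^{(n)}=a+i\frac{b-a}{n}$ for $i=0,1,\dots,n$, and define the Riemann sums $$A_n=\frac{b-a}{n}\sum_{i=1}^{n} f\big(x_i^{(n)}\big),\qquad B_n=\frac{b-a}{n}\sum_{i=0}^{n-1} f\big(x_i^{(n)}\big).$$ *)

(* Defs.v *)
From Stdlib Require Import Reals Lra.
Open Scope R_scope.

Definition increasing_on (f : R -> R) (a b : R) : Prop :=
  forall x y, a <= x -> x <= y -> y <= b -> f x <= f y.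

Definition convex_on (f : R -> R) (a b : R) : Prop :=
  forall x y t, a <= x <= b -> a <= y <= b -> 0 <= t <= 1 ->
    f (t * x + (1 - t) * y) <= t * f x + (1 - t) * f y.

Definition concave_on (f : R -> R) (a b : R) : Prop :=
  forall x y t, a <= x <= b -> a <= y <= b -> 0 <= t <= 1 ->
    t * f x + (1 - t) * f y <= f (t * x + (1 - t) * y).

Definition xpt (a b : R) (n i : nat) : R := a + INR i * ((b - a) / INR n).

(* A_n = (b-a)/n * sum_{i=1}^{n} f(x_i),  B_n = (b-a)/n * sum_{i=0}^{n-1} f(x_i).
   Both assume n >= 1 (sum_f_R0 g k has k+1 terms g 0 .. g k). *)
Definition A_sum (f : R -> R) (a b : R) (n : nat) : R :=
  (b - a) / INR n * sum_f_R0 (fun j => f (xpt a b n (S j))) (n - 1).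

Definition B_sum (f : R -> R) (a b : R) (n : nat) : R :=
  (b - a) / INR n * sum_f_R0 (fun j => f (xpt a b n j)) (n - 1).

(* Main.v *)
Require Import Defs.
From Stdlib Require Import Reals Lra Lia Psatz.
Open Scope R_scope.

Lemma Rdiv_le_0_compat x y : 0 <= x -> 0 < y -> 0 <= x / y.
Proof. intros; apply Rle_mult_inv_pos; auto. Qed.

Lemma cvx_w f a b x y z al be : convex_on f a b -> a<=x<=b -> a<=y<=b ->
  0<=al -> 0<=be -> 0<al+be -> (al+be)*z = al*x+be*y ->
  (al+be) * f z <= al * f x + be * f y.
Proof.
  intros H Hx Hy Ha Hb Hs Hz.
  assert (Ht : 0 <= al/(al+be) <= 1).
  { split. apply Rdiv_le_0_compat; lra.
    apply (Rmult_le_reg_r (al+be)); [lra|]. field_simplify; lra. }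
  assert (Hz' : z = al/(al+be) * x + (1 - al/(al+be)) * y).
  { apply (Rmult_eq_reg_l (al+be)); [|lra]. field_simplify; lra. }
  pose proof (H x y _ Hx Hy Ht) as K. rewrite <- Hz' in K.
  apply (Rmult_le_compat_l (al+be)) in K; [|lra].
  replace (al * f x + be * f y) with
    ((al + be) * (al / (al + be) * f x + (1 - al / (al + be)) * f y)) by (field; lra).
  exact K.
Qed.

Lemma ccv_w f a b x y z al be : concave_on f a b -> a<=x<=b -> a<=y<=b ->
  0<=al -> 0<=be -> 0<al+be -> (al+be)*z = al*x+be*y ->
  al * f x + be * f y <= (al+be) * f z.
Proof.
  intros H Hx Hy Ha Hb Hs Hz.
  assert (Hc : convex_on (fun t => - f t) a b).
  { intros u v t Hu Hv Ht. pose proof (H u v t Hu Hv Ht). lra. }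
  pose proof (cvx_w _ a b x y z al be Hc Hx Hy Ha Hb Hs Hz). lra.
Qed.

Lemma xpt_range a b n i : a < b -> (1 <= n)%nat -> (i <= n)%nat ->
  a <= xpt a b n i <= b.
Proof.
  intros hab hn hi. unfold xpt.
  assert (Hn : 0 < INR n) by (apply lt_0_INR; lia).
  assert (Hi : INR i <= INR n) by (apply le_INR; lia).
  assert (0 <= INR i) by apply pos_INR.
  assert (0 <= (b-a)/INR n) by (apply Rdiv_le_0_compat; lra).
  split. nra.
  assert (INR i * ((b - a) / INR n) <= INR n * ((b - a) / INR n)) by nra.
  replace (INR n * ((b - a) / INR n)) with (b-a) in H1 by (field; lra). lra.
Qed.

Lemma xpt_mono f a b n i j : a < b -> increasing_on f a b -> (1 <= n)%nat ->
  (i <= j)%nat -> (j <= n)%nat -> f (xpt a b n i) <= f (xpt a b n j).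
Proof.
  intros hab hinc hn hij hj.
  destruct (xpt_range a b n i hab hn ltac:(lia)).
  destruct (xpt_range a b n j hab hn hj).
  apply hinc; try lra.
  unfold xpt.
  assert (Hn : 0 < INR n) by (apply lt_0_INR; lia).
  assert (Hi : INR i <= INR j) by (apply le_INR; lia).
  assert (0 <= (b-a)/INR n) by (apply Rdiv_le_0_compat; lra). nra.
Qed.

Lemma tele (u : nat -> R) m : sum_f_R0 (fun k => u (S k) - u k) m = u (S m) - u 0%nat.
Proof. induction m; simpl; [ring| rewrite IHm; ring]. Qed.

Lemma tele' (u : nat -> R) m : sum_f_R0 (fun k => u k - u (S k)) m = u 0%nat - u (S m).
Proof. induction m; simpl; [ring| rewrite IHm; ring]. Qed.

Lemma sum_lin c (g d : nat -> R) m :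
  sum_f_R0 (fun k => c * g k + d k) m = c * sum_f_R0 g m + sum_f_R0 d m.
Proof. induction m; simpl; [ring| rewrite IHm; ring]. Qed.

Lemma sum_ub (g : nat -> R) c m : (forall k, (k <= m)%nat -> g k <= c) ->
  sum_f_R0 g m <= INR (S m) * c.
Proof.
  induction m; intros H; simpl.
  - specialize (H 0%nat (le_n _)). lra.
  - rewrite S_INR in *. assert (H1 := IHm (fun k Hk => H k ltac:(lia))).
    specialize (H (S m) (le_n _)). destruct m; simpl in *; lra.
Qed.

Lemma sum_lb (g : nat -> R) c m : (forall k, (k <= m)%nat -> c <= g k) ->
  INR (S m) * c <= sum_f_R0 g m.
Proof.
  induction m; intros H; simpl.
  - specialize (H 0%nat (le_n _)). lra.
  - rewrite S_INR in *. assert (H1 := IHm (fun k Hk => H k ltac:(lia))).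
    specialize (H (S m) (le_n _)). destruct m; simpl in *; lra.
Qed.

Lemma pos_sm m : 1 <= INR (S m).
Proof. rewrite S_INR. pose proof (pos_INR m). lra. Qed.

Theorem corollary2p2 (f : R -> R) (a b : R) (hab : a < b)
  (hinc : increasing_on f a b)
  (hcc : convex_on f a b \/ concave_on f a b)
  (n : nat) (hn : (1 <= n)%nat) :
  A_sum f a b (S n) <= A_sum f a b n /\ B_sum f a b n <= B_sum f a b (S n).
Proof.
  destruct n as [|m]; [lia|]. clear hn.
  unfold A_sum, B_sum.
  replace (S (S m) - 1)%nat with (S m) by lia.
  replace (S m - 1)%nat with m by lia.
  set (N := INR (S m)).
  assert (HN : 1 <= N) by apply pos_sm.
  assert (HN1 : INR (S (S m)) = N + 1) by (unfold N; rewrite (S_INR (S m)); ring).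
  rewrite HN1.
  set (F := fun j => f (xpt a b (S m) j)).
  set (G := fun j => f (xpt a b (S (S m)) j)).
  assert (Fin : forall S0 S1, N * S1 <= (N+1) * S0 ->
     (b - a) / (N + 1) * S1 <= (b - a) / N * S0).
  { intros S0 S1 H.
    replace ((b - a) / (N + 1) * S1) with ((b-a)/(N*(N+1)) * (N*S1)) by (field; lra).
    replace ((b - a) / N * S0) with ((b-a)/(N*(N+1)) * ((N+1)*S0)) by (field; lra).
    apply Rmult_le_compat_l; [apply Rdiv_le_0_compat; nra|exact H]. }
  assert (Fin' : forall S0 S1, (N+1) * S0 <= N * S1 ->
     (b - a) / N * S0 <= (b - a) / (N + 1) * S1).
  { intros S0 S1 H.
    replace ((b - a) / (N + 1) * S1) with ((b-a)/(N*(N+1)) * (N*S1)) by (field; lra).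
    replace ((b - a) / N * S0) with ((b-a)/(N*(N+1)) * ((N+1)*S0)) by (field; lra).
    apply Rmult_le_compat_l; [apply Rdiv_le_0_compat; nra|exact H]. }
  assert (R1 : forall i, (i <= S m)%nat -> a <= xpt a b (S m) i <= b)
    by (intros; apply xpt_range; lia || lra).
  assert (R2 : forall i, (i <= S (S m))%nat -> a <= xpt a b (S (S m)) i <= b)
    by (intros; apply xpt_range; lia || lra).
  assert (XE : forall i n, xpt a b n i = a + INR i * ((b-a)/INR n)) by reflexivity.
  assert (Hb : xpt a b (S (S m)) (S (S m)) = xpt a b (S m) (S m)).
  { unfold xpt. fold N. rewrite HN1. field. lra. }
  assert (H0 : xpt a b (S (S m)) 0 = xpt a b (S m) 0).
  { unfold xpt. simpl. ring. }
  destruct hcc as [hc | hc]; split.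
  -
    apply Fin.
    assert (P : forall k, (k <= S m)%nat ->
      (N+1) * G (S k) <= (N+2) * F (S k) + ((INR k + 1) * F k - (INR (S k) + 1) * F (S k))).
    { intros k Hk. rewrite S_INR.
      destruct (Nat.eq_dec k (S m)) as [->|Hne].
      - unfold G, F. rewrite Hb. fold N. apply Req_le; ring.
      - assert (Kl : INR k + 1 <= N) by (unfold N; rewrite S_INR; apply Rplus_le_compat_r, le_INR; lia).
        pose proof (pos_INR k).
        pose proof (cvx_w f a b (xpt a b (S m) (S k)) (xpt a b (S m) k) (xpt a b (S (S m)) (S k))
           (N - INR k) (INR k + 1) hc (R1 (S k) ltac:(lia)) (R1 k ltac:(lia))) as C.
        assert (T1 : 0 <= N - INR k) by lra.
        assert (T2 : 0 <= INR k + 1) by lra.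
        assert (T3 : 0 < N - INR k + (INR k + 1)) by lra.
        specialize (C T1 T2 T3).
        unfold F, G.
        replace (N - INR k + (INR k + 1)) with (N+1) in C by ring.
        assert (E : (N + 1) * xpt a b (S (S m)) (S k) =
           (N - INR k) * xpt a b (S m) (S k) + (INR k + 1) * xpt a b (S m) k).
        { unfold xpt. fold N. rewrite HN1, S_INR. field. lra. }
        specialize (C E). lra. }
    pose (u := fun k => (INR k + 1) * F k).
    assert (Q : sum_f_R0 (fun k => (N+1) * G (S k) + 0) (S m) <=
                sum_f_R0 (fun k => (N+2) * F (S k) + (u k - u (S k))) (S m)).
    { apply sum_Rle. intros k Hk. rewrite Rplus_0_r. unfold u. exact (P k Hk). }
    rewrite !sum_lin, tele' in Q.
    assert (Z : sum_f_R0 (fun _ : nat => 0) (S m) = 0).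
    { clear. induction (S m); simpl; [ring| rewrite IHn; ring]. }
    rewrite Z in Q. unfold u in Q. simpl sum_f_R0 in Q.
    assert (LB : INR (S m) * F 0%nat <= sum_f_R0 (fun j => F (S j)) m).
    { apply sum_lb. intros k Hk. apply xpt_mono; auto; lia. }
    change (N * sum_f_R0 (fun j => G (S j)) (S m) <= (N+1) * sum_f_R0 (fun j => F (S j)) m).
    change (sum_f_R0 (fun j => G (S j)) (S m)) with (sum_f_R0 (fun j => G (S j)) m + G (S (S m))).
    rewrite HN1 in Q. simpl INR in Q.
    set (S0 := sum_f_R0 (fun j : nat => F (S j)) m) in *.
    set (S1 := sum_f_R0 (fun j : nat => G (S j)) m) in *.
    set (GL := G (S (S m))) in *. set (FX := F (S (S m))) in *. set (F0 := F 0%nat) in *.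
    assert (Q' : (N + 1) * (S1 + GL) <= (N+2) * S0 + F0) by lra.
    apply (Rmult_le_reg_l (N+1)); [lra|].
    assert (N * ((N + 1) * (S1 + GL)) <= N * ((N+2) * S0 + F0)) by (apply Rmult_le_compat_l; lra).
    fold N in LB. nra.
  -
    apply Fin'.
    pose (u := fun k => (INR k - 1) * G k).
    assert (Q : sum_f_R0 (fun k => N * F k + 0) m <=
                sum_f_R0 (fun k => (N-1) * G k + (u (S k) - u k)) m).
    { apply sum_Rle. intros k Hk. rewrite Rplus_0_r. unfold u. rewrite S_INR.
      assert (Kl : INR k + 1 <= N) by (unfold N; rewrite S_INR; apply Rplus_le_compat_r, le_INR; lia).
      pose proof (pos_INR k).
      pose proof (cvx_w f a b (xpt a b (S (S m)) k) (xpt a b (S (S m)) (S k)) (xpt a b (S m) k)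
           (N - INR k) (INR k) hc (R2 k ltac:(lia)) (R2 (S k) ltac:(lia))) as C.
      assert (T1 : 0 <= N - INR k) by lra.
      assert (T2 : 0 <= INR k) by lra.
      assert (T3 : 0 < N - INR k + INR k) by lra.
      specialize (C T1 T2 T3).
      replace (N - INR k + INR k) with N in C by ring.
      assert (E : N * xpt a b (S m) k =
           (N - INR k) * xpt a b (S (S m)) k + INR k * xpt a b (S (S m)) (S k)).
      { unfold xpt. fold N. rewrite HN1, S_INR. field. lra. }
      specialize (C E). unfold F, G.
      eapply Rle_trans; [exact C|apply Req_le; ring]. }
    assert (Z : forall p, sum_f_R0 (fun _ : nat => 0) p = 0).
    { clear. induction p; simpl; [ring| rewrite IHp; ring]. }
    rewrite !sum_lin, tele, Z in Q. unfold u in Q.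
    assert (LB : INR (S (S m)) * G 0%nat <= sum_f_R0 (fun j => G j) (S m)).
    { apply sum_lb. intros k Hk. apply xpt_mono; auto; lia. }
    rewrite HN1 in LB.
    change ((N + 1) * sum_f_R0 (fun j => F j) m <= N * sum_f_R0 (fun j => G j) (S m)).
    change (sum_f_R0 (fun j => G j) (S m)) with (sum_f_R0 (fun j => G j) m + G (S m)) in *.
    fold N in Q. simpl INR in Q.
    set (S0 := sum_f_R0 (fun j : nat => F j) m) in *.
    set (SG := sum_f_R0 (fun j : nat => G j) m) in *.
    set (GL := G (S m)) in *. set (G0 := G 0%nat) in *.
    assert (Q' : N * S0 <= (N - 1) * (SG + GL) + G0) by lra.
    apply (Rmult_le_reg_l N); [lra|].
    assert ((N + 1) * (N * S0) <= (N+1) * ((N - 1) * (SG + GL) + G0)) by (apply Rmult_le_compat_l; lra).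
    nra.
  -
    apply Fin.
    pose (u := fun k => INR k * G (S k)).
    assert (Q : sum_f_R0 (fun k => (N-1) * G (S k) + (u (S k) - u k)) m <=
                sum_f_R0 (fun k => N * F (S k) + 0) m).
    { apply sum_Rle. intros k Hk. rewrite Rplus_0_r. unfold u. rewrite S_INR.
      assert (Kl : INR k + 1 <= N) by (unfold N; rewrite S_INR; apply Rplus_le_compat_r, le_INR; lia).
      pose proof (pos_INR k).
      pose proof (ccv_w f a b (xpt a b (S (S m)) (S k)) (xpt a b (S (S m)) (S (S k))) (xpt a b (S m) (S k))
           (N - (INR k + 1)) (INR k + 1) hc (R2 (S k) ltac:(lia)) (R2 (S (S k)) ltac:(lia))) as C.
      assert (T1 : 0 <= N - (INR k + 1)) by lra.
      assert (T2 : 0 <= INR k + 1) by lra.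
      assert (T3 : 0 < N - (INR k + 1) + (INR k + 1)) by lra.
      specialize (C T1 T2 T3).
      replace (N - (INR k + 1) + (INR k + 1)) with N in C by ring.
      assert (E : N * xpt a b (S m) (S k) =
           (N - (INR k + 1)) * xpt a b (S (S m)) (S k) + (INR k + 1) * xpt a b (S (S m)) (S (S k))).
      { unfold xpt. fold N. rewrite HN1, !S_INR. field. lra. }
      specialize (C E). unfold F, G.
      eapply Rle_trans; [|exact C]. apply Req_le; ring. }
    assert (Z : forall p, sum_f_R0 (fun _ : nat => 0) p = 0).
    { clear. induction p; simpl; [ring| rewrite IHp; ring]. }
    rewrite !sum_lin, tele, Z in Q. unfold u in Q. fold N in Q. simpl INR in Q.
    assert (UB : sum_f_R0 (fun j => G (S j)) m <= INR (S m) * G (S (S m))).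
    { apply sum_ub. intros k Hk. apply xpt_mono; auto; lia. }
    fold N in UB.
    change (N * sum_f_R0 (fun j => G (S j)) (S m) <= (N+1) * sum_f_R0 (fun j => F (S j)) m).
    change (sum_f_R0 (fun j => G (S j)) (S m)) with (sum_f_R0 (fun j => G (S j)) m + G (S (S m))).
    set (S0 := sum_f_R0 (fun j : nat => F (S j)) m) in *.
    set (SG := sum_f_R0 (fun j : nat => G (S j)) m) in *.
    set (GL := G (S (S m))) in *. set (G1 := G 1%nat) in *.
    assert (Q' : (N - 1) * SG + N * GL <= N * S0) by lra.
    apply (Rmult_le_reg_l N); [lra|].
    assert ((N + 1) * ((N - 1) * SG + N * GL) <= (N+1) * (N * S0)) by (apply Rmult_le_compat_l; lra).
    nra.
  -
    apply Fin'.
    pose (u := fun k => INR k * F (pred k)).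
    assert (Q : sum_f_R0 (fun k => (N+2) * F k + (u k - u (S k))) (S m) <=
                sum_f_R0 (fun k => (N+1) * G k + 0) (S m)).
    { apply sum_Rle. intros k Hk. rewrite Rplus_0_r. unfold u.
      destruct k as [|k].
      - unfold G, F. rewrite H0. simpl. apply Req_le; ring.
      - simpl pred. rewrite !S_INR.
        assert (Kl : INR k + 1 <= N) by (unfold N; rewrite S_INR; apply Rplus_le_compat_r, le_INR; lia).
        pose proof (pos_INR k).
        pose proof (ccv_w f a b (xpt a b (S m) (S k)) (xpt a b (S m) k) (xpt a b (S (S m)) (S k))
           (N - INR k) (INR k + 1) hc (R1 (S k) ltac:(lia)) (R1 k ltac:(lia))) as C.
        assert (T1 : 0 <= N - INR k) by lra.
        assert (T2 : 0 <= INR k + 1) by lra.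
        assert (T3 : 0 < N - INR k + (INR k + 1)) by lra.
        specialize (C T1 T2 T3).
        replace (N - INR k + (INR k + 1)) with (N+1) in C by ring.
        assert (E : (N + 1) * xpt a b (S (S m)) (S k) =
           (N - INR k) * xpt a b (S m) (S k) + (INR k + 1) * xpt a b (S m) k).
        { unfold xpt. fold N. rewrite HN1, S_INR. field. lra. }
        specialize (C E). unfold F, G.
        eapply Rle_trans; [|exact C]. apply Req_le; ring. }
    assert (Z : forall p, sum_f_R0 (fun _ : nat => 0) p = 0).
    { clear. induction p; simpl; [ring| rewrite IHp; ring]. }
    rewrite !sum_lin, tele', Z in Q. unfold u in Q. rewrite HN1 in Q. simpl pred in Q. simpl INR in Q.
    assert (UB : sum_f_R0 (fun j => F j) m <= INR (S m) * F (S m)).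
    { apply sum_ub. intros k Hk. apply xpt_mono; auto; lia. }
    fold N in UB.
    change ((N + 1) * sum_f_R0 (fun j => F j) m <= N * sum_f_R0 (fun j => G j) (S m)).
    replace (sum_f_R0 F (S m)) with (sum_f_R0 (fun j => F j) m + F (S m)) in Q by reflexivity.
    set (S0 := sum_f_R0 (fun j : nat => F j) m) in *.
    set (S1 := sum_f_R0 (fun j : nat => G j) (S m)) in *.
    set (FN := F (S m)) in *. set (F0 := F 0%nat) in *.
    assert (Q' : (N + 2) * S0 + FN <= (N + 1) * S1) by lra.
    apply (Rmult_le_reg_l (N+1)); [lra|].
    assert (N * ((N + 2) * S0 + FN) <= N * ((N + 1) * S1)) by (apply Rmult_le_compat_l; lra).
    nra.
Qed.
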